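(* Let $H$ be the real vector space of Hermitian matrices on a finite-dimensional system with inner product $\langle A,B\rangle=\mathrm{Tr}(AB)$. Let $\mathcal{K}\subset H$ be a proper convex cone (closed, convex, pointed, with nonempty interior) and $\mathcal{F}\subset H$ a compact set such that $\{\lambda Z:0\le\lambda\le1,\ Z\in\mathcal{F}\}$ is convex and $\mathcal{F}\cap\mathrm{int}(\mathcal{K})\neq\emptyset$. Define $R^{\mathcal{F}}_{\mathcal{K}}(\mathcal{E}):=\inf\{\lambda\in\mathbb{R}_+:\ (\mathcal{E}+\lambda\mathcal{E}')/(1+\lambda)\in\mathcal{F},\ \mathcal{E}'\in\mathcal{K}\}$ and $\mathcal{N}:=\{\mathcal{E}\in H:\ \delta Z-\mathcal{E}\notin\mathcal{K}\ \ \forall\delta<1,\ Z\in\mathcal{F}\}$. Let $\mathcal{X}\subseteq H$ be any set with $\{\lambda\varphi:\lambda\in\mathbb{R}_+,\ \varphi\in\mathcal{X}\}=\mathcal{K}^*$. If $\mathcal{E}\in\mathcal{N}$, then $$\max_{\varphi\in\mathcal{X}\setminus\{0\}}\frac{\langle\varphi,\mathcal{E}\rangle}{\max_{Z\in\mathcal{F}}\langle\varphi,Z\rangle}=1+R^{\mathcal{F}}_{\mathcal{K}}(\mathcal{E}).$$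
   Context: $\mathcal{K}^*:=\{\varphi\in H:\langle\varphi,x\rangle\ge0\ \forall x\in\mathcal{K}\}$ is the dual cone; $\mathrm{int}$ denotes interior; $\mathbb{R}_+$ the nonnegative reals. *)

(* Defs.v *)
From HB Require Import structures.
From mathcomp Require Import all_boot all_order all_algebra.
From mathcomp Require Import all_classical all_reals all_analysis.
From mathcomp Require Import complex.
Set Implicit Arguments. Unset Strict Implicit. Unset Printing Implicit Defensive.
Import Order.TTheory GRing.Theory Num.Theory.
Import numFieldNormedType.Exports.
Local Open Scope classical_set_scope.
Local Open Scope ring_scope.
Local Open Scope complex_scope.

Definition herm (R : realType) (n : nat) : set 'M[R[i]]_n :=
  [set A | (map_mx (fun z : R[i] => z^*) A)^T = A].

(* Hilbert-Schmidt inner product <A,B> = Tr(AB) (real for Hermitian A,B) *)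
Definition ip (R : realType) (n : nat) (A B : 'M[R[i]]_n) : R :=
  complex.Re (\tr (A *m B)).

Definition rscale (R : realType) (n : nat) (l : R) (A : 'M[R[i]]_n) : 'M[R[i]]_n :=
  (l%:C) *: A.

(* Standard (Euclidean) topology on complex matrices, transported through the
   real-linear bijection A |-> (Re A, Im A) onto 'M[R]_n * 'M[R]_n. *)
Definition coords (R : realType) (n : nat) (A : 'M[R[i]]_n) :
  'M[R]_n * 'M[R]_n :=
  (map_mx (@complex.Re R) A, map_mx (@complex.Im R) A).

Definition mx_compact (R : realType) (n : nat) (S : set 'M[R[i]]_n) : Prop :=
  compact (coords (n:=n) @` S).

Definition mx_closed (R : realType) (n : nat) (S : set 'M[R[i]]_n) : Prop :=
  closed (coords (n:=n) @` S).

(* interior of S relative to the space H of Hermitian matrices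
   (subspace topology) *)
Definition herm_interior (R : realType) (n : nat) (S : set 'M[R[i]]_n) :
  set 'M[R[i]]_n :=
  [set A | herm A /\ exists U : set ('M[R]_n * 'M[R]_n),
      open U /\ U (coords A) /\ (forall B, herm B -> U (coords B) -> S B)].

Definition proper_cone (R : realType) (n : nat) (K : set 'M[R[i]]_n) : Prop :=
  K `<=` @herm R n /\
  (forall l A, 0 <= l -> K A -> K (rscale l A)) /\
  (forall A B, K A -> K B -> K (A + B)) /\
  mx_closed K /\
  (forall A, K A -> K (- A) -> A = 0) /\
  herm_interior K !=set0.

Definition dual_cone (R : realType) (n : nat) (K : set 'M[R[i]]_n) :
  set 'M[R[i]]_n :=
  [set phi | herm phi /\ forall X, K X -> 0 <= ip phi X].

Definition real_convex (R : realType) (n : nat) (S : set 'M[R[i]]_n) : Prop :=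
  forall A B (t : R), S A -> S B -> 0 <= t <= 1 ->
    S (rscale t A + rscale (1 - t) B).

Definition shrink_hull (R : realType) (n : nat) (F : set 'M[R[i]]_n) :
  set 'M[R[i]]_n :=
  [set A | exists l Z, 0 <= l <= 1 /\ F Z /\ A = rscale l Z].

Definition robustness (R : realType) (n : nat) (K F : set 'M[R[i]]_n)
  (E : 'M[R[i]]_n) : R :=
  inf [set l : R | 0 <= l /\ exists E', K E' /\
        F (rscale (1 + l)^-1 (E + rscale l E'))].

Definition Nset (R : realType) (n : nat) (K F : set 'M[R[i]]_n) :
  set 'M[R[i]]_n :=
  [set E | herm E /\ forall (d : R) Z, d < 1 -> F Z -> ~ K (rscale d Z - E)].

(* max_{Z in F} <phi, Z> (attained since F is compact) *)
Definition support_fn (R : realType) (n : nat) (F : set 'M[R[i]]_n)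
  (phi : 'M[R[i]]_n) : R :=
  sup [set ip phi Z | Z in F].

(* Main.v *)
Require Import Defs.
From HB Require Import structures.
From mathcomp Require Import all_boot all_order all_algebra.
From mathcomp Require Import all_classical all_reals all_analysis.
From mathcomp Require Import complex.
From mathcomp Require Import ring lra.
Import Order.TTheory GRing.Theory Num.Theory.
Import numFieldNormedType.Exports.
Local Open Scope classical_set_scope.
Local Open Scope ring_scope.
Set Implicit Arguments. Unset Strict Implicit. Unset Printing Implicit Defensive.

Section Alg.
Variables (R : realType) (m : nat).
Local Open Scope complex_scope.
Local Notation M := 'M[R[i]]_m.
Local Notation W := ('M[R]_m * 'M[R]_m)%type.

Lemma msq_ge0 (x : R) : 0 <= x * x.
Proof. by rewrite -expr2 sqr_ge0. Qed.

Lemma ReD (x y : R[i]) : complex.Re (x + y) = complex.Re x + complex.Re y.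
Proof. by case: x => a b; case: y. Qed.
Lemma ImD (x y : R[i]) : complex.Im (x + y) = complex.Im x + complex.Im y.
Proof. by case: x => a b; case: y. Qed.
Lemma ReM (x y : R[i]) :
  complex.Re (x * y) = complex.Re x * complex.Re y - complex.Im x * complex.Im y.
Proof. by case: x => a b; case: y. Qed.
Lemma ImM (x y : R[i]) :
  complex.Im (x * y) = complex.Re x * complex.Im y + complex.Im x * complex.Re y.
Proof. by case: x => a b; case: y. Qed.
Lemma ReN (x : R[i]) : complex.Re (- x) = - complex.Re x.
Proof. by case: x. Qed.
Lemma ImN (x : R[i]) : complex.Im (- x) = - complex.Im x.
Proof. by case: x. Qed.
Lemma Re0 : complex.Re (0 : R[i]) = 0. Proof. by []. Qed.
Lemma Im0 : complex.Im (0 : R[i]) = 0. Proof. by []. Qed.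
Lemma ReJ (x : R[i]) : complex.Re (x^*)%C = complex.Re x.
Proof. by case: x. Qed.
Lemma ImJ (x : R[i]) : complex.Im (x^*)%C = - complex.Im x.
Proof. by case: x. Qed.
Lemma ReC (l : R) (x : R[i]) : complex.Re (l%:C * x) = l * complex.Re x.
Proof. by case: x => a b; rewrite ReM /= mul0r subr0. Qed.
Lemma ImC (l : R) (x : R[i]) : complex.Im (l%:C * x) = l * complex.Im x.
Proof. by case: x => a b; rewrite ImM /= mul0r addr0. Qed.
Lemma ReS (I : Type) (r : seq I) (P : pred I) (f : I -> R[i]) :
  complex.Re (\sum_(i <- r | P i) f i) = \sum_(i <- r | P i) complex.Re (f i).
Proof.
elim/big_rec2: _ => // i y1 y2 _ <-; by rewrite ReD.
Qed.

Lemma herm_eq (A : M) : herm A <-> forall i j, A j i = (A i j)^*%C.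
Proof.
split=> [hA|h].
  by move=> i j; rewrite -{1}hA !mxE.
rewrite /herm /=; apply/matrixP => i j; rewrite !mxE h; by case: (A i j) => a b; rewrite /= opprK.
Qed.

Lemma cplx_eq (x y : R[i]) :
  complex.Re x = complex.Re y -> complex.Im x = complex.Im y -> x = y.
Proof. by case: x => a b; case: y => c d /= -> ->. Qed.

Lemma Wadd1 (x y : W) : (x + y).1 = x.1 + y.1. Proof. by []. Qed.
Lemma Wadd2 (x y : W) : (x + y).2 = x.2 + y.2. Proof. by []. Qed.
Lemma Wopp1 (x : W) : (- x).1 = - x.1. Proof. by []. Qed.
Lemma Wopp2 (x : W) : (- x).2 = - x.2. Proof. by []. Qed.
Lemma Wscale1 (l : R) (x : W) : (l *: x).1 = l *: x.1. Proof. by []. Qed.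
Lemma Wscale2 (l : R) (x : W) : (l *: x).2 = l *: x.2. Proof. by []. Qed.
Lemma W01 : (0 : W).1 = 0. Proof. by []. Qed.
Lemma W02 : (0 : W).2 = 0. Proof. by []. Qed.
Definition WE := (Wadd1, Wadd2, Wopp1, Wopp2, Wscale1, Wscale2, W01, W02).

Definition hermW (x : W) := forall i j, x.1 j i = x.1 i j /\ x.2 j i = - x.2 i j.

Definition co (A : M) : W := coords A.
Arguments co : simpl never.
Definition unco (x : W) : M := \matrix_(i, j) (x.1 i j +i* x.2 i j).

Lemma co1E (A : M) i j : (co A).1 i j = complex.Re (A i j).
Proof. by rewrite /co /coords /= mxE. Qed.
Lemma co2E (A : M) i j : (co A).2 i j = complex.Im (A i j).
Proof. by rewrite /co /coords /= mxE. Qed.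

Lemma uncoK x : co (unco x) = x.
Proof.
case: x => a b; rewrite /co /coords /unco; congr (_, _); apply/matrixP => i j;
by rewrite !mxE.
Qed.
Lemma coK A : unco (co A) = A.
Proof.
apply/matrixP => i j; rewrite /unco mxE co1E co2E.
by case: (A i j).
Qed.
Lemma co_inj : injective co.
Proof. by move=> A B h; rewrite -(coK A) h coK. Qed.

Lemma hermP (A : M) : herm A <-> hermW (co A).
Proof.
rewrite herm_eq; split=> h i j.
  by rewrite !co1E !co2E h ReJ ImJ.
have [h1 h2] := h i j; rewrite !co1E !co2E in h1 h2.
by apply: cplx_eq; rewrite ?ReJ ?ImJ.
Qed.

Lemma coD (A B : M) : co (A + B) = co A + co B.
Proof.
rewrite /co /coords; congr (_, _); apply/matrixP => i j; rewrite !mxE;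
by [rewrite ReD | rewrite ImD].
Qed.
Lemma coN (A : M) : co (- A) = - co A.
Proof.
rewrite /co /coords; congr (_, _); apply/matrixP => i j; rewrite !mxE;
by [rewrite ReN | rewrite ImN].
Qed.
Lemma coB (A B : M) : co (A - B) = co A - co B.
Proof. by rewrite coD coN. Qed.
Lemma coZ (l : R) (A : M) : co (rscale l A) = l *: co A.
Proof.
rewrite /co /coords /rscale; congr (_, _); apply/matrixP => i j; rewrite !mxE;
by [rewrite ReC | rewrite ImC].
Qed.
Lemma co0 : co 0 = 0.
Proof. by rewrite -(subrr (0 : M)) coB subrr. Qed.

Lemma hermD (A B : M) : herm A -> herm B -> herm (A + B).
Proof.
move=> /hermP hA /hermP hB; apply/hermP; rewrite coD => i j.
have [a1 a2] := hA i j; have [b1 b2] := hB i j.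
rewrite !co1E !co2E in a1 a2 b1 b2.
by rewrite !WE !mxE a1 a2 b1 b2 opprD.

Qed.
Lemma hermZ (l : R) (A : M) : herm A -> herm (rscale l A).
Proof.
move=> /hermP hA; apply/hermP; rewrite coZ => i j.
have [a1 a2] := hA i j; rewrite !co1E !co2E in a1 a2.
by rewrite !WE !mxE a1 a2 mulrN.
Qed.
Lemma hermN (A : M) : herm A -> herm (- A).
Proof.
move=> /hermP hA; apply/hermP; rewrite coN => i j.
have [a1 a2] := hA i j; rewrite !co1E !co2E in a1 a2.
by rewrite !WE !mxE a1 a2.
Qed.
Lemma hermB (A B : M) : herm A -> herm B -> herm (A - B).
Proof. by move=> hA hB; apply: hermD => //; exact: hermN. Qed.
Lemma herm0 : herm (0 : M).
Proof. by apply/hermP; rewrite co0 => i j; rewrite !WE !mxE oppr0. Qed.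

Lemma rscaleA (a b : R) (A : M) : rscale a (rscale b A) = rscale (a * b) A.
Proof. apply: co_inj; by rewrite !coZ scalerA. Qed.
Lemma rscale1 (A : M) : rscale 1 A = A.
Proof. apply: co_inj; by rewrite !coZ scale1r. Qed.
Lemma rscale0 (A : M) : rscale 0 A = 0.
Proof. apply: co_inj; by rewrite !coZ scale0r co0. Qed.
Lemma rscaler0 (a : R) : rscale a (0 : M) = 0.
Proof. apply: co_inj; by rewrite !coZ co0 scaler0. Qed.
Lemma rscaleDl (a b : R) (A : M) : rscale (a + b) A = rscale a A + rscale b A.
Proof. apply: co_inj; by rewrite coD !coZ scalerDl. Qed.
Lemma rscaleDr (a : R) (A B : M) : rscale a (A + B) = rscale a A + rscale a B.
Proof. apply: co_inj; by rewrite coD !coZ coD scalerDr. Qed.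
Lemma rscaleN (a : R) (A : M) : rscale a (- A) = - rscale a A.
Proof. apply: co_inj; by rewrite coN !coZ coN scalerN. Qed.
Lemma rscaleNl (a : R) (A : M) : rscale (- a) A = - rscale a A.
Proof. apply: co_inj; by rewrite coN !coZ scaleNr. Qed.
Lemma rscaleB (a : R) (A B : M) : rscale a (A - B) = rscale a A - rscale a B.
Proof. by rewrite rscaleDr rscaleN. Qed.

Lemma ipDl (A B C : M) : ip (A + B) C = ip A C + ip B C.
Proof. by rewrite /ip mulmxDl mxtraceD ReD. Qed.
Lemma ipC (A B : M) : ip A B = ip B A.
Proof. by rewrite /ip mxtrace_mulC. Qed.
Lemma ipDr (A B C : M) : ip C (A + B) = ip C A + ip C B.
Proof. by rewrite ipC ipDl !(ipC C). Qed.
Lemma ipZl (l : R) (A B : M) : ip (rscale l A) B = l * ip A B.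
Proof. by rewrite /ip /rscale -scalemxAl mxtraceZ ReC. Qed.
Lemma ipZr (l : R) (A B : M) : ip B (rscale l A) = l * ip B A.
Proof. by rewrite ipC ipZl ipC. Qed.
Lemma ipNl (A B : M) : ip (- A) B = - ip A B.
Proof. by rewrite /ip mulNmx raddfN ReN. Qed.
Lemma ipNr (A B : M) : ip B (- A) = - ip B A.
Proof. by rewrite ipC ipNl ipC. Qed.
Lemma ipBl (A B C : M) : ip (A - B) C = ip A C - ip B C.
Proof. by rewrite ipDl ipNl. Qed.
Lemma ipBr (A B C : M) : ip C (A - B) = ip C A - ip C B.
Proof. by rewrite ipDr ipNr. Qed.
Lemma ip0r (A : M) : ip A 0 = 0.
Proof. by rewrite /ip mulmx0 mxtrace0. Qed.
Lemma ip0l (A : M) : ip 0 A = 0.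
Proof. by rewrite ipC ip0r. Qed.

Definition dotW (x y : W) : R :=
  \sum_i \sum_j (x.1 i j * y.1 i j + x.2 i j * y.2 i j).

Lemma ip_co (A B : M) : herm B -> ip A B = dotW (co A) (co B).
Proof.
move=> /herm_eq hB; rewrite /ip /mxtrace ReS /dotW; apply: eq_bigr => i _.
rewrite mxE ReS; apply: eq_bigr => j _.
by rewrite ReM hB ReJ ImJ !co1E !co2E mulrN opprK.
Qed.

Lemma dotW_ge0 x : 0 <= dotW x x.
Proof.
by apply: sumr_ge0 => i _; apply: sumr_ge0 => j _; apply: addr_ge0; apply: msq_ge0.
Qed.

Lemma dotW_eq0 x : dotW x x = 0 -> x = 0.
Proof.
move=> h.
have H : forall i j, x.1 i j * x.1 i j + x.2 i j * x.2 i j = 0.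
  move=> i j.
  have /eqP := h; rewrite psumr_eq0; last first.
    by move=> k _; apply: sumr_ge0 => l _; apply: addr_ge0; apply: msq_ge0.
  move=> /allP /(_ i (mem_index_enum _)) /=; rewrite psumr_eq0; last first.
    by move=> l _; apply: addr_ge0; apply: msq_ge0.
  by move=> /allP /(_ j (mem_index_enum _)) /eqP.
case: x H {h} => a b H; congr (_, _); apply/matrixP => i j; rewrite !mxE;
  have := H i j => /= e.
  have : a i j * a i j = 0.
    apply/eqP; rewrite eq_le msq_ge0 andbT -e lerDl; exact: msq_ge0.
  by move/eqP; rewrite mulf_eq0 orbb => /eqP.
have : b i j * b i j = 0.
  apply/eqP; rewrite eq_le msq_ge0 andbT -e lerDr; exact: msq_ge0.
by move/eqP; rewrite mulf_eq0 orbb => /eqP.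
Qed.

Lemma ip_ge0 (A : M) : herm A -> 0 <= ip A A.
Proof. by move=> hA; rewrite ip_co //; exact: dotW_ge0. Qed.
Lemma ip_eq0 (A : M) : herm A -> ip A A = 0 -> A = 0.
Proof. by move=> hA; rewrite ip_co // => /dotW_eq0; rewrite -co0 => /co_inj. Qed.

End Alg.


Lemma cfst (U V : topologicalType) : continuous (@fst U V).
Proof. by move=> [a b]; apply: cvg_fst. Qed.
Lemma csnd (U V : topologicalType) : continuous (@snd U V).
Proof. by move=> [a b]; apply: cvg_snd. Qed.

Lemma cont_sum (R : realType) (T : topologicalType) (I : finType) (f : I -> T -> R) :
  (forall i, continuous (f i)) -> continuous (fun x => \sum_i f i x).
Proof.
move=> fc; rewrite unlock /=.
elim: (index_enum I) => [|a s IH] /=.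
  by move=> x; apply: cst_continuous.
by move=> x; apply: continuousD; [apply: fc | apply: IH].
Qed.

Lemma closed_le_fun (R : realType) (T : topologicalType) (f : T -> R) c :
  continuous f -> closed [set x | f x <= c].
Proof.
move=> fc; have -> : [set x | f x <= c] = f @^-1` [set y | y <= c] by [].
by apply: preimage_closed => [x _|]; [apply: fc | apply: closed_le].
Qed.
Lemma closed_ge_fun (R : realType) (T : topologicalType) (f : T -> R) c :
  continuous f -> closed [set x | c <= f x].
Proof.
move=> fc; have -> : [set x | c <= f x] = f @^-1` [set y | c <= y] by [].
by apply: preimage_closed => [x _|]; [apply: fc | apply: closed_ge].
Qed.
Lemma closed_eq_fun (R : realType) (T : topologicalType) (f : T -> R) c :
  continuous f -> closed [set x | f x = c].
Proof.
move=> fc; have -> : [set x | f x = c] = [set x | f x <= c] `&` [set x | c <= f x].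
  by rewrite eqEsubset; split => x /=; [move=> ->; rewrite lexx | move=> [a b]; apply/eqP; rewrite eq_le a b].
by apply: closedI; [apply: closed_le_fun | apply: closed_ge_fun].
Qed.

Section Topo.
Variables (R : realType) (m : nat).
Local Notation M := 'M[R[i]]_m.
Local Notation W := ('M[R]_m * 'M[R]_m)%type.

Lemma cont_dotW (T : topologicalType) (f g : T -> W) :
  continuous f -> continuous g -> continuous (fun x => dotW (f x) (g x)).
Proof.
move=> fc gc; rewrite /dotW; apply: cont_sum => i; apply: cont_sum => j.
have c1 : forall h : T -> W, continuous h -> continuous (fun x => (h x).1 i j).
  move=> h hc x.
  apply: (@continuous_comp _ _ _ (fun x => (h x).1) (fun M : 'M[R]_m => M i j)).
    exact: (continuous_comp (hc x) (@cfst _ _ (h x))).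
  exact: (@coord_continuous R m m i j).
have c2 : forall h : T -> W, continuous h -> continuous (fun x => (h x).2 i j).
  move=> h hc x.
  apply: (@continuous_comp _ _ _ (fun x => (h x).2) (fun M : 'M[R]_m => M i j)).
    exact: (continuous_comp (hc x) (@csnd _ _ (h x))).
  exact: (@coord_continuous R m m i j).
move=> x /=; apply: cvgD; apply: cvgM;
  by [apply: c1 | apply: c2].
Qed.

Lemma cont_into_mx (T : topologicalType) a b (f : T -> 'M[R]_(a, b)) :
  (forall i j, continuous (fun x => f x i j)) -> continuous f.
Proof.
move=> fc x A [P hP sPA].
apply: (@filterS _ _ _ [set y | forall i j, P i j (f y i j)]).
  by move=> y hy; apply: sPA.
apply: filter_forall => i; apply: filter_forall => j.
exact: (fc i j x _ (hP i j)).
Qed.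

Definition BoxM (c : R) := [set A : 'M[R]_m | forall i j, `|A i j| <= c].
Definition BoxW (c : R) :=
  [set x : W | forall i j, `|x.1 i j| <= c /\ `|x.2 i j| <= c].

Lemma BoxM_compact c : compact (BoxM c).
Proof.
have h1 : compact [set v : 'rV[R]_(m * m) | forall k, `[- c, c]%classic (v ord0 k)].
  exact: (@rV_compact _ _ (fun=> `[- c, c]%classic) (fun _ => @segment_compact R _ _)).
have -> : BoxM c = vec_mx @` [set v : 'rV[R]_(m * m) | forall k, `[- c, c]%classic (v ord0 k)].
  rewrite eqEsubset; split.
    move=> A hA; exists (mxvec A); last by rewrite mxvecK.
    move=> k /=; case: (mxvec_indexP k) => i j; rewrite mxvecE.
    by rewrite in_itv /= -ler_norml.
  move=> _ [v hv <-] i j; rewrite mxE ler_norml.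
  by have := hv (mxvec_index i j); rewrite /= in_itv.
apply: continuous_compact => //.
apply: continuous_subspaceT; apply: cont_into_mx => i j.
move=> v; rewrite /=.
have -> : (fun x : 'rV[R]_(m * m) => vec_mx x i j) = (fun x => x ord0 (mxvec_index i j)).
  by apply: funext => y; rewrite mxE.
exact: (@coord_continuous R 1 (m * m) ord0 (mxvec_index i j)).
Qed.

Lemma BoxW_compact c : compact (BoxW c).
Proof.
have -> : BoxW c = BoxM c `*` BoxM c.
  rewrite eqEsubset; split => x /=.
    by move=> h; split => i j; have [] := h i j.
  by move=> [h1 h2] i j; split; [apply: h1 | apply: h2].
by apply: compact_setX; apply: BoxM_compact.
Qed.
End Topo.


Section Nrm.
Variables (R : realType) (m : nat).
Local Notation W := ('M[R]_m * 'M[R]_m)%type.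
Definition nrm (x : W) : R := \sum_i \sum_j (`|x.1 i j| + `|x.2 i j|).

Lemma nrm_ge0 (x : W) : 0 <= nrm x.
Proof. by apply: sumr_ge0 => i _; apply: sumr_ge0 => j _; apply: addr_ge0. Qed.

Lemma nrm_entry (x : W) (i j : 'I_m) : `|x.1 i j| <= nrm x /\ `|x.2 i j| <= nrm x.
Proof.
have h : `|x.1 i j| + `|x.2 i j| <= nrm x.
  rewrite /nrm (bigD1 i) //= (bigD1 j) //= -addrA lerDl.
  apply: addr_ge0; first by apply: sumr_ge0 => k _; apply: addr_ge0.
  by apply: sumr_ge0 => k _; apply: sumr_ge0 => l _; apply: addr_ge0.
split; apply: le_trans h; [rewrite lerDl | rewrite lerDr]; exact: normr_ge0.
Qed.

Lemma nrm_eq0 (x : W) : nrm x = 0 -> x = 0.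
Proof.
move=> h; case: x h => a b h; congr (_, _); apply/matrixP => i j; rewrite !mxE;
  have [h1 h2] := nrm_entry (a, b) i j; rewrite h /= in h1 h2;
  apply/eqP; rewrite -normr_le0 //.
Qed.
End Nrm.



Section Sep.
Variables (R : realType) (m : nat).
Local Notation M := 'M[R[i]]_m.
Local Notation W := ('M[R]_m * 'M[R]_m)%type.

Lemma dotW_entry (x : W) i j : x.1 i j * x.1 i j <= dotW x x /\ x.2 i j * x.2 i j <= dotW x x.
Proof.
have h : x.1 i j * x.1 i j + x.2 i j * x.2 i j <= dotW x x.
  rewrite /dotW (bigD1 i) //= (bigD1 j) //= -addrA lerDl.
  apply: addr_ge0; first by apply: sumr_ge0 => k _; apply: addr_ge0; apply: msq_ge0.
  by apply: sumr_ge0 => k _; apply: sumr_ge0 => l _; apply: addr_ge0; apply: msq_ge0.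
split; apply: le_trans h; [rewrite lerDl | rewrite lerDr]; exact: msq_ge0.
Qed.

Lemma sq_bound (a C : R) : a * a <= C -> `|a| <= C + 1.
Proof.
move=> h; have ha : 0 <= `|a| by [].
have e : a * a = `|a| * `|a| by rewrite -normrM ger0_norm // msq_ge0.
rewrite e in h.
case: (lerP 1 `|a|) => h1; nra.
Qed.

Lemma cont_sub : continuous (fun p : W * W => p.1 - p.2).
Proof. by move=> p; apply: cvgB; [exact: cfst | exact: csnd]. Qed.

Lemma ip_sq (A B : M) : ip (A - B) (A - B) = ip A A - 2 * ip A B + ip B B.
Proof. rewrite !ipBl !ipBr (ipC B A); ring. Qed.

Lemma nearest (D K : set M) :
  D `<=` @herm R m -> K `<=` @herm R m ->
  compact ((@co R m) @` D) -> closed ((@co R m) @` K) ->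
  D !=set0 -> K 0 ->
  (forall A B t, D A -> D B -> 0 <= t <= 1 -> D (rscale t A + rscale (1 - t) B)) ->
  (forall l A, 0 <= l -> K A -> K (rscale l A)) ->
  (forall A B, K A -> K B -> K (A + B)) ->
  (forall d, D d -> ~ K d) ->
  exists psi, herm psi /\ (forall k, K k -> 0 <= ip psi k) /\
    (forall d, D d -> ip psi d < 0).
Proof.
move=> hDh hKh hDc hKc [d0 hd0] hK0 hDconv hKs hKa hDK.
have [c0 c0D c0max] : exists2 c, c \in (@co R m) @` D &
    forall t, t \in (@co R m) @` D -> dotW t t <= dotW c c.
  apply: compact_EVT_max => //; first by exists (co d0), d0.
  apply: continuous_subspaceT => x.
  have h := @cont_dotW R m W id id.
  by apply: h => y; exact: cvg_id.
set bD := dotW c0 c0.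
have hbD : forall d, D d -> ip d d <= bD.
  move=> d hd; rewrite ip_co; last exact: hDh.
  apply: c0max; rewrite inE; by exists d.
have bD0 : 0 <= bD by exact: dotW_ge0.
set C := 6 * bD.
set Kc := (@co R m) @` K `&` [set x : W | dotW x x <= C].
have Kc_cl : closed Kc.
  apply: closedI => //; apply: closed_le_fun.
  have h := @cont_dotW R m W id id.
  by apply: h => y; exact: cvg_id.
have Kc_cp : compact Kc.
  apply: (subclosed_compact Kc_cl (@BoxW_compact R m (C + 1))).
  move=> x [_ hx] i j; have [h1 h2] := dotW_entry x i j.
  by split; apply: sq_bound; apply: le_trans hx.
set A := (@co R m) @` D `*` Kc.
have A_cp : compact A by apply: compact_setX.
have [p pA pmin] : exists2 p, p \in A &
    forall t, t \in A -> dotW (p.1 - p.2) (p.1 - p.2) <= dotW (t.1 - t.2) (t.1 - t.2).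
  apply: compact_EVT_min => //.
    exists (co d0, co 0); split; first by exists d0.
    split; first by exists 0.
    rewrite /= co0 /dotW big1 => [|i _]; first by rewrite /C mulr_ge0.
    by rewrite big1 // => j _; rewrite !WE !mxE !mul0r addr0.
  apply: continuous_subspaceT => x.
  have h := @cont_dotW R m (W * W)%type (fun p => p.1 - p.2) (fun p => p.1 - p.2).
  by apply: h; exact: cont_sub.
move: pA; rewrite inE => -[[ds hds eds] [[ks hks eks] _]].
have hmin : forall d k, D d -> K k -> ip (ds - ks) (ds - ks) <= ip (d - k) (d - k).
  move=> d k hd hk.
  have hdk : herm (d - k) by apply: hermB; [apply: hDh | apply: hKh].
  have hdsk : herm (ds - ks) by apply: hermB; [apply: hDh | apply: hKh].
  have hmin0 : forall k', K k' -> ip k' k' <= C ->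
      ip (ds - ks) (ds - ks) <= ip (d - k') (d - k').
    move=> k' hk' hk'C.
    have hdk' : herm (d - k') by apply: hermB; [apply: hDh | apply: hKh].
    rewrite !ip_co // !coB eds eks.
    apply: (pmin (co d, co k')); rewrite inE; split; first by exists d.
    have e : dotW (co k') (co k') = ip k' k' by rewrite ip_co //; exact: hKh.
    by split; [exists k' | rewrite /= e].
  case: (lerP (ip k k) C) => hkC; first exact: hmin0.
  apply: (le_trans (hmin0 0 hK0 _)); first by rewrite ip0r; exact: mulr_ge0.
  rewrite subr0 ip_sq.
  have hv := ip_ge0 (hermB (hermZ 2 (hDh _ hd)) (hermZ (2^-1) (hKh _ hk))).
  rewrite ip_sq !ipZl !ipZr in hv.
  have := hbD _ hd.
  have := ip_ge0 (hDh _ hd).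
  rewrite /C in hkC.
  move: hv; set a := ip d d; set b := ip d k; set c := ip k k => hv ha hab.
  have e2 : 2 * 2^-1 = 1 :> R by rewrite mulfV.
  nra.
set w := ds - ks.
have hwh : herm w by apply: hermB; [apply: hDh | apply: hKh].
have hw0 : 0 < ip w w.
  rewrite lt_def ip_ge0 // andbT; apply/eqP => /(ip_eq0 hwh) /eqP.
  rewrite subr_eq0 => /eqP eq; apply: (hDK _ hds); by rewrite eq.
have hvar : forall d k, D d -> K k -> ip w w <= ip w (d - k).
  move=> d k hd hk.
  rewrite leNgt; apply/negP => hlt.
  have hdk : herm (d - k) by apply: hermB; [apply: hDh | apply: hKh].
  have hu : herm ((d - k) - w) by apply: hermB.
  set g := ip w (d - k) - ip w w.
  set h := ip ((d - k) - w) ((d - k) - w).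
  have hg : g < 0 by rewrite /g; lra.
  have hh : 0 <= h by apply: ip_ge0.
  set tau := - g / (h - g).
  have hhg : 0 < h - g by lra.
  have etau : tau * (h - g) = - g by rewrite /tau mulfVK // gt_eqF.
  have tau0 : 0 < tau by rewrite /tau divr_gt0 // oppr_gt0.
  have tau1 : tau <= 1 by rewrite /tau ler_pdivrMr // mul1r; lra.
  have t0 : 0 <= tau by apply: ltW.
  have t1 : 0 <= 1 - tau by lra.
  have t01 : 0 <= tau <= 1 by apply/andP; split.
  have hP := hmin _ _ (hDconv _ _ tau hd hds t01)
                  (hKa _ _ (hKs _ _ t0 hk) (hKs _ _ t1 hks)).
  have {hP} hP : ip w w <= ip w w + 2 * tau * g + tau * tau * h.
    have e : ip (rscale tau d + rscale (1 - tau) ds - (rscale tau k + rscale (1 - tau) ks))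
               (rscale tau d + rscale (1 - tau) ds - (rscale tau k + rscale (1 - tau) ks))
             = ip w w + 2 * tau * g + tau * tau * h.
      rewrite /g /h /w !(ipDl, ipDr, ipNl, ipNr, ipZl, ipZr).
      rewrite ?(ipC ds d) ?(ipC k d) ?(ipC ks d) ?(ipC k ds) ?(ipC ks ds) ?(ipC ks k).
      ring.
    by rewrite -e.
  have e2 : tau * h = - g + tau * g by nra.
  nra.
exists (ks - ds); split; first by apply: hermB; [apply: hKh | apply: hDh].
have eN : forall X, ip (ks - ds) X = - ip w X.
  by move=> X; rewrite /w !ipBl; ring.
split.
  move=> k hk; rewrite eN oppr_ge0 leNgt; apply/negP => hpos.
  set lam := (`|ip w ds| + 1) / ip w k.
  have lam0 : 0 <= lam by rewrite /lam divr_ge0 // ltW.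
  have := hvar ds (rscale lam k) hds (hKs _ _ lam0 hk).
  rewrite ipBr ipZr /lam mulfVK ?gt_eqF //.
  have := ler_norm (ip w ds).
  lra.
move=> d hd; rewrite eN.
have := hvar d 0 hd hK0; rewrite subr0.
lra.
Qed.

End Sep.


Ltac co_ring := apply: co_inj; rewrite ?(coD, coN, coB, coZ, co0);
  congr (_, _); apply/matrixP => i j; rewrite !WE !mxE; ring.

Lemma closed_forall (T : topologicalType) (I : Type) (P : I -> set T) :
  (forall i, closed (P i)) -> closed [set x | forall i, P i x].
Proof.
move=> hP.
have -> : [set x | forall i, P i x] = \bigcap_(i in setT) P i.
  by rewrite eqEsubset; split => x h i //; apply: h.
by apply: closed_bigI => i _; apply: hP.
Qed.

Lemma closed_le2 (R : realType) (T : topologicalType) (f g : T -> R) :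
  continuous f -> continuous g -> closed [set x | f x <= g x].
Proof.
move=> fc gc.
have -> : [set x | f x <= g x] = [set x | (fun y => f y - g y) x <= 0].
  by rewrite eqEsubset; split => x /=; rewrite subr_le0.
by apply: closed_le_fun => x; apply: cvgB; [apply: fc | apply: gc].
Qed.

Lemma closed_eq2 (R : realType) (T : topologicalType) (f g : T -> R) :
  continuous f -> continuous g -> closed [set x | f x = g x].
Proof.
move=> fc gc.
have -> : [set x | f x = g x] = [set x | f x <= g x] `&` [set x | g x <= f x].
  by rewrite eqEsubset; split => x /=; [move=> ->; rewrite lexx | move=> [a b]; apply/eqP; rewrite eq_le a b].
by apply: closedI; apply: closed_le2.
Qed.

Lemma closed_imp (T : topologicalType) (P : Prop) (A : set T) :
  closed A -> closed [set x | P -> A x].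
Proof.
move=> hA; case: (pselect P) => hP.
  have -> : [set x | P -> A x] = A by rewrite eqEsubset; split => x h //; apply: h.
  exact: hA.
have -> : [set x | P -> A x] = setT by rewrite eqEsubset; split => x h // /hP.
exact: closedT.
Qed.

Lemma seq_min (R : realType) (s : seq R) :
  (forall i, i \in s -> 0 < i) -> exists2 e0 : R, 0 < e0 & forall i, i \in s -> e0 <= i.
Proof.
elim: s => [|a s IH] h; first by exists 1 => //.
have [e0 he0 hs] := IH (fun i hi => h i (@mem_behead _ (a :: s) _ hi)).
have ha : 0 < a by apply: h; rewrite mem_head.
exists (Num.min e0 a); first by rewrite lt_min he0 ha.
move=> i; rewrite in_cons => /orP [/eqP -> | hi]; first by rewrite ge_min lexx orbT.
by rewrite ge_min hs.
Qed.

Section Ent.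
Variables (R : realType) (m : nat).
Local Notation W := ('M[R]_m * 'M[R]_m)%type.
Lemma c_ent1 i j : continuous (fun x : W => x.1 i j).
Proof.
move=> x.
apply: (@continuous_comp _ _ _ (fun x : W => x.1) (fun M : 'M[R]_m => M i j)).
  exact: cfst.
exact: (@coord_continuous R m m i j).
Qed.
Lemma c_ent2 i j : continuous (fun x : W => x.2 i j).
Proof.
move=> x.
apply: (@continuous_comp _ _ _ (fun x : W => x.2) (fun M : 'M[R]_m => M i j)).
  exact: csnd.
exact: (@coord_continuous R m m i j).
Qed.
Lemma closed_hermW : closed [set x : W | hermW x].
Proof.
apply: closed_forall => i; apply: closed_forall => j.
apply: closedI; apply: closed_eq2; try exact: c_ent1; try exact: c_ent2.
by move=> x; apply: cvgN; exact: c_ent2.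
Qed.
Lemma cont_dot_l (y : W) : continuous (fun x : W => dotW x y).
Proof.
have h := @cont_dotW R m W id (fun=> y).
by apply: h => z; [exact: cvg_id | exact: cst_continuous].
Qed.
End Ent.

Section Main.
Variables (R : realType) (m : nat) (K F : set 'M[R[i]]_m) (E Z0 : 'M[R[i]]_m).
Local Notation M := 'M[R[i]]_m.
Local Notation W := ('M[R]_m * 'M[R]_m)%type.
Hypothesis hKh : K `<=` @herm R m.
Hypothesis hKs : forall l A, 0 <= l -> K A -> K (rscale l A).
Hypothesis hKa : forall A B, K A -> K B -> K (A + B).
Hypothesis hKc : mx_closed K.
Hypothesis hFh : F `<=` @herm R m.
Hypothesis hFc : mx_compact F.
Hypothesis hconv : real_convex (shrink_hull F).
Hypothesis hZ0F : F Z0.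
Hypothesis hZ0i : herm_interior K Z0.
Hypothesis hN : Nset K F E.

Lemma hZ0h : herm Z0. Proof. by case: hZ0i. Qed.
Lemma hEh : herm E. Proof. by case: hN. Qed.

Lemma D1 : exists2 e0 : R, 0 < e0 & forall B, herm B ->
  (forall i j, `|(co Z0).1 i j - (co B).1 i j| < e0 /\
               `|(co Z0).2 i j - (co B).2 i j| < e0) -> K B.
Proof.
case: hZ0i => _ [U [oU [UZ hU]]].
have : nbhs (co Z0) U by apply: open_nbhs_nbhs; split.
move=> /nbhs_ballP [e e0 heU]; exists e => // B hB hsm.
apply: hU => //; apply: heU; split; split => // i j; have [h1 h2] := hsm i j.
  by rewrite /ball /=.
by rewrite /ball /=.
Qed.


Lemma coE1 (A : M) i j : (co A).1 i j = complex.Re (A i j). Proof. exact: co1E. Qed.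

Lemma D1' : exists2 e0 : R, 0 < e0 & forall x, herm x ->
  (forall i j, `|(co x).1 i j| < e0 /\ `|(co x).2 i j| < e0) -> K (Z0 + x).
Proof.
have [e0 he0 hK] := D1; exists e0 => // x hx hs.
apply: hK; first exact: hermD hZ0h hx.
move=> i j; rewrite coD !WE !mxE -!co1E -!co2E !opprD !addrA !subrr !add0r !normrN.
exact: hs.
Qed.

Lemma int_dir (x : M) : herm x ->
  exists2 eta : R, 0 < eta & forall t, 0 <= t <= eta -> K (Z0 + rscale t x).
Proof.
move=> hx; have [e0 he0 hK] := D1'.
have hn := nrm_ge0 (co x).
exists (e0 / (nrm (co x) + 1)).
  by apply: divr_gt0 => //; lra.
move=> t /andP [t0 te]; apply: hK; first exact: hermZ.
have key : t * nrm (co x) < e0.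
  apply: (le_lt_trans (y := e0 / (nrm (co x) + 1) * nrm (co x))).
    by apply: ler_wpM2r.
  rewrite mulrAC ltr_pdivrMr; last lra.
  nra.
move=> i j; rewrite coZ !WE !mxE -!co1E -!co2E !normrM (ger0_norm t0).
have [h1 h2] := nrm_entry (co x) i j.
split; apply: le_lt_trans key; exact: ler_wpM2l.
Qed.

Lemma dual_bound : exists2 c : R, 0 < c & forall psi, herm psi ->
  (forall k, K k -> 0 <= ip psi k) -> nrm (co psi) * c <= ip psi Z0.
Proof.
have [e0 he0 hK] := D1'.
exists (e0 / 2); first by apply: divr_gt0.
move=> psi hpsi hdual.
pose D : M := unco (\matrix_(i, j) Num.sg ((co psi).1 i j),
                    \matrix_(i, j) Num.sg ((co psi).2 i j)).
have coD' : co D = (\matrix_(i, j) Num.sg ((co psi).1 i j),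
                    \matrix_(i, j) Num.sg ((co psi).2 i j)) by rewrite uncoK.
have hD : herm D.
  apply/hermP; rewrite coD' => i j /=; rewrite !mxE.
  have /hermP hp := hpsi; have [h1 h2] := hp i j; rewrite !co1E !co2E in h1 h2.
  by rewrite h1 h2 sgrN.
have ipD : ip psi D = nrm (co psi).
  rewrite ip_co // coD' /dotW /nrm; apply: eq_bigr => i _; apply: eq_bigr => j _.
  by rewrite /= !mxE !normrEsg ![Num.sg _ * _]mulrC.
have hK' : K (Z0 + rscale (- (e0 / 2)) D).
  apply: hK; first exact: hermZ.
  move=> i j; rewrite coZ coD' !WE !mxE !normrM normrN.
  have h2 : `|e0 / 2| = e0 / 2 by rewrite ger0_norm // divr_ge0 // ltW.
  rewrite h2; split; apply: (le_lt_trans (y := e0 / 2 * 1)).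
  - by apply: ler_wpM2l; [rewrite divr_ge0 // ltW | rewrite normr_sg lern1 leq_b1].
  - lra.
  - by apply: ler_wpM2l; [rewrite divr_ge0 // ltW | rewrite normr_sg lern1 leq_b1].
  - lra.
have := hdual _ hK'; rewrite ipDr ipZr ipD.
lra.
Qed.

Definition Rset := [set l : R | 0 <= l /\ exists E', K E' /\ F (rscale (1 + l)^-1 (E + rscale l E'))].

Lemma rep c W' K2 : 1 < c -> F W' -> K K2 -> E = rscale c W' - K2 -> Rset (c - 1).
Proof.
move=> c1 hW hK2 hE; split; first lra.
have c10 : c - 1 != 0 by apply/eqP; lra.
have c0 : c != 0 by apply/eqP; lra.
exists (rscale (c - 1)^-1 K2); split.
  by apply: hKs => //; rewrite invr_ge0; lra.
rewrite rscaleA mulfV // rscale1 hE subrK.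
have -> : 1 + (c - 1) = c by rewrite addrC subrK.
by rewrite rscaleA mulVf // rscale1.
Qed.

Lemma Rset_n0 : Rset !=set0.
Proof.
have hnE : herm (- E) := hermN hEh.
have [eta he hK] := int_dir hnE.
pose c := 1 + eta^-1.
have c1 : 1 < c by rewrite /c ltrDl invr_gt0.
have c0 : 0 < c by lra.
exists (c - 1); apply: (rep (W' := Z0) (K2 := rscale c Z0 - E)) => //.
  have hci : 0 <= c^-1 <= eta.
    rewrite invr_ge0 ltW //= -[c^-1]mul1r ler_pdivrMr //.
    rewrite /c mulrDr mulr1 mulfV ?gt_eqF //; lra.
  have := hKs (ltW c0) (hK _ hci).
  by rewrite rscaleDr rscaleA mulfV ?gt_eqF // rscale1.
by rewrite opprB addrC subrK.
Qed.

Lemma rob_ge0 : 0 <= robustness K F E.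
Proof. by apply: lb_le_inf; [exact: Rset_n0 | move=> l []]. Qed.

Lemma rob_le l : Rset l -> robustness K F E <= l.
Proof. by move=> hl; apply: (ge_inf (E := Rset)) => //; exists 0 => x []. Qed.

Lemma supp (phi : M) : herm phi -> exists2 Zm, F Zm &
  (forall Z, F Z -> ip phi Z <= ip phi Zm) /\ support_fn F phi = ip phi Zm.
Proof.
move=> hphi.
have [c cA cmax] : exists2 c, c \in coords (n:=m) @` F &
    forall t, t \in coords (n:=m) @` F -> dotW (co phi) t <= dotW (co phi) c.
  apply: compact_EVT_max; first by exists (co Z0), Z0.
    exact: hFc.
  apply: continuous_subspaceT => x.
  have h := @cont_dotW R m W (fun=> co phi) id.
  apply: h => y; [exact: cst_continuous | exact: cvg_id].
move: cA; rewrite inE => -[Zm hZm hc].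
have hle : forall Z, F Z -> ip phi Z <= ip phi Zm.
  move=> Z hZ; rewrite !ip_co; try by apply: hFh.
  apply: le_trans (cmax (co Z) _) _; first by rewrite inE; exists Z.
  by rewrite -hc; exact: lexx.
exists Zm => //; split => //.
apply/eqP; rewrite eq_le; apply/andP; split.
  by apply: ge_sup; [exists (ip phi Zm), Zm | move=> _ [Z hZ <-]; apply: hle].
apply: ub_le_sup; last by exists Zm.
by exists (ip phi Zm) => _ [Z hZ <-]; apply: hle.
Qed.


Definition tstar := 1 + robustness K F E.

Lemma tstar_ge1 : 1 <= tstar.
Proof. by rewrite /tstar lerDl rob_ge0. Qed.

Lemma KZ0 : K Z0.
Proof.
have [e0 he0 hK] := D1'.
have := hK 0 (@herm0 R m); rewrite addr0; apply => i j.
by rewrite co0 !WE !mxE normr0.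
Qed.

Lemma K0 : K 0.
Proof. by rewrite -(rscale0 Z0); apply: hKs => //; exact: KZ0. Qed.

Lemma disj eps : 0 < eps -> forall s, shrink_hull F s ->
  ~ K (rscale tstar s - E - rscale eps Z0).
Proof.
move=> he s [mu [W' [/andP [mu0 mu1] [hW hs]]]] hk.
set k := rscale tstar s - E - rscale eps Z0 in hk.
set c := tstar * mu.
set K1 := k + rscale eps Z0.
have hE : E = rscale c W' - K1.
  by rewrite /K1 /k hs /c; co_ring.
have hWh : herm W' by apply: hFh.
have [eta heta hKeta] := int_dir (hermN hWh).
have hKt : forall t, 0 <= t <= eps * eta -> K (K1 - rscale t W').
  move=> t /andP [t0 te].
  have h1 : 0 <= t / eps <= eta.
    by rewrite divr_ge0 ?(ltW he) //= ler_pdivrMr // mulrC.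
  have := hKa (hk) (hKs (ltW he) (hKeta _ h1)).
  suff -> : k + rscale eps (Z0 + rscale (t / eps) (- W')) = K1 - rscale t W' by [].
  rewrite /K1.
  have et : eps * (t / eps) = t by rewrite mulrC mulfVK // gt_eqF.
  apply: co_inj; rewrite ?(coD, coN, coB, coZ, co0).
  congr (_, _); apply/matrixP => i j; rewrite !WE !mxE; field; by rewrite gt_eqF.
have hd : forall t, 0 <= t <= eps * eta -> c - t < 1 -> False.
  move=> t ht hct.
  have [_ hN2] := hN.
  apply: (hN2 (c - t) W' hct hW).
  suff -> : rscale (c - t) W' - E = K1 - rscale t W' by apply: hKt.
  by rewrite hE; co_ring.
have ee : 0 < eps * eta by apply: mulr_gt0.
case: (lerP c 1) => hc1.
  apply: (hd (eps * eta)); first by rewrite ltW //= lexx.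
  lra.
set t := Num.min (eps * eta) ((c - 1) / 2).
have t0 : 0 < t by rewrite /t lt_min ee /=; lra.
have tle1 : t <= eps * eta by rewrite /t ge_min lexx.
have tle2 : t <= (c - 1) / 2 by rewrite /t ge_min lexx orbT.
have hR := rep (c := c - t) (W' := W') (K2 := K1 - rscale t W').
have hRs : Rset (c - t - 1).
  apply: hR => //; first lra.
    by apply: hKt; rewrite ltW //= tle1.
  by rewrite hE; co_ring.
have := rob_le hRs.
have : c <= tstar by rewrite /c -{2}(mulr1 tstar) ler_wpM2l // (le_trans ler01 tstar_ge1).
rewrite /tstar; lra.
Qed.


Lemma S_herm s : shrink_hull F s -> herm s.
Proof. by move=> [l [Z [_ [hZ ->]]]]; apply: hermZ; apply: hFh. Qed.

Lemma sep_eps eps : 0 < eps -> exists psi, herm psi /\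
  (forall k, K k -> 0 <= ip psi k) /\ ip psi Z0 = 1 /\
  forall Z, F Z -> tstar * ip psi Z <= ip psi E + eps.
Proof.
move=> he.
set D := [set rscale tstar s - E - rscale eps Z0 | s in shrink_hull F].
have hDh : D `<=` @herm R m.
  move=> _ [s hs <-]; apply: hermB; last by apply: hermZ; exact: hZ0h.
  by apply: hermB; [apply: hermZ; exact: S_herm | exact: hEh].
have hDc : compact ((@co R m) @` D).
  set G := fun p : R * W => tstar *: (p.1 *: p.2) - co E - eps *: co Z0.
  have -> : (@co R m) @` D = G @` (`[0, 1]%classic `*` (coords (n:=m) @` F)).
    rewrite eqEsubset; split.
      move=> _ [_ [s [l [Z [hl [hZ ->]]]] <-] <-].
      exists (l, co Z); first by split; [rewrite /= in_itv /= | exists Z].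
      by rewrite /G !coB !coZ.
    move=> _ [[l y] [hl [Z hZ hy]] <-].
    exists (rscale tstar (rscale l Z) - E - rscale eps Z0).
      exists (rscale l Z) => //; exists l, Z; split => //.
    have hy2 : co Z = y := hy.
    by rewrite !coB !coZ /G /= -hy2.
  apply: continuous_compact; last first.
    by apply: compact_setX; [exact: segment_compact | exact: hFc].
  apply: continuous_subspaceT => p.
  apply: cvgB; last exact: cvg_cst.
  apply: cvgB; last exact: cvg_cst.
  apply: cvgZ; first exact: cvg_cst.
  apply: cvgZ; [exact: cfst | exact: csnd].
have hS1 : forall Z, F Z -> shrink_hull F Z.
  by move=> Z hZ; exists 1, Z; split; [rewrite ler01 lexx | split => //; rewrite rscale1].
have hDn : D !=set0.
  by exists (rscale tstar Z0 - E - rscale eps Z0), Z0 => //; apply: hS1.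
have hDconv : forall A B t, D A -> D B -> 0 <= t <= 1 ->
    D (rscale t A + rscale (1 - t) B).
  move=> _ _ t [s1 hs1 <-] [s2 hs2 <-] ht.
  exists (rscale t s1 + rscale (1 - t) s2); first exact: hconv.
  co_ring.
have hDK : forall d, D d -> ~ K d.
  by move=> _ [s hs <-]; apply: disj.
have [psi [hpsi [hdual hneg]]] :=
  nearest hDh hKh hDc hKc hDn K0 hDconv hKs hKa hDK.
have [cb hcb hb] := dual_bound.
have hZD : forall Z, F Z -> D (rscale tstar Z - E - rscale eps Z0).
  by move=> Z hZ; exists Z => //; apply: hS1.
have hpsi0 : psi != 0.
  apply/eqP => e; have := hneg _ (hZD _ hZ0F); rewrite e ip0l ltxx //.
have hn : 0 < nrm (co psi).
  rewrite lt_def nrm_ge0 andbT; apply/eqP => /nrm_eq0; rewrite -co0 => /co_inj.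
  by move/eqP: hpsi0.
have hc : 0 < ip psi Z0.
  apply: (lt_le_trans _ (hb _ hpsi hdual)); exact: mulr_gt0.
set c := ip psi Z0.
exists (rscale c^-1 psi); split; first exact: hermZ.
split.
  by move=> k hk; rewrite ipZl mulr_ge0 // ?invr_ge0 ?(ltW hc) // hdual.
split; first by rewrite ipZl mulVf // gt_eqF.
move=> Z hZ; rewrite !ipZl.
have := hneg _ (hZD _ hZ); rewrite !ipBr !ipZr -/c => h.
have hci : 0 < c^-1 by rewrite invr_gt0.
have e1 : c^-1 * c = 1 by rewrite mulVf // gt_eqF.
nra.
Qed.

Lemma limit : exists psi, herm psi /\
  (forall k, K k -> 0 <= ip psi k) /\ ip psi Z0 = 1 /\
  forall Z, F Z -> tstar * ip psi Z <= ip psi E.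
Proof.
have [cb hcb hb] := dual_bound.
set Bc := [set x : W | hermW x] `&` ([set x : W | forall k, K k -> 0 <= dotW x (co k)]
   `&` [set x : W | dotW x (co Z0) = 1]).
have Bc_cl : closed Bc.
  apply: closedI; first exact: closed_hermW.
  apply: closedI.
    apply: closed_forall => k; apply: closed_imp; apply: closed_ge_fun; exact: cont_dot_l.
  apply: closed_eq_fun; exact: cont_dot_l.
have hBpsi : forall x, Bc x -> [/\ herm (unco x),
    (forall k, K k -> 0 <= ip (unco x) k) & ip (unco x) Z0 = 1].
  move=> x [hx [hd h1]]; split.
  - by apply/hermP; rewrite uncoK.
  - by move=> k hk; rewrite ip_co ?uncoK; [apply: hd | apply: hKh].
  - by rewrite ip_co ?uncoK //; exact: hZ0h.
have Bc_sub : Bc `<=` BoxW (cb^-1).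
  move=> x hx; have [h1 h2 h3] := hBpsi x hx.
  have := hb _ h1 h2; rewrite h3 uncoK => hn.
  have hn' : nrm x <= cb^-1 by rewrite -[cb^-1]mul1r ler_pdivlMr.
  by move=> i j; have [a b] := nrm_entry x i j; split; apply: le_trans hn'.
have Bc_cp : compact Bc := subclosed_compact Bc_cl (@BoxW_compact R m cb^-1) Bc_sub.
set G := fun e : R => [set x : W | forall Z, F Z ->
   tstar * dotW x (co Z) <= dotW x (co E) + e].
have hfam : closed_fam_of Bc [set e : R | 0 < e] (fun e => Bc `&` G e).
  exists G => // e _; apply: closed_forall => Z; apply: closed_imp.
  apply: closed_le2 => x.
    by apply: cvgM; [exact: cvg_cst | exact: cont_dot_l].
  by apply: cvgD; [exact: cont_dot_l | exact: cvg_cst].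
have hfin : finI [set e : R | 0 < e] (fun e => Bc `&` G e).
  move=> D' hD'.
  have [e0 he0 hmin] := @seq_min R (finmap.enum_fset D') (fun i hi => set_mem (hD' i hi)).
  have [psi [hpsi [hd [h1 hF]]]] := sep_eps he0.
  exists (co psi) => i hi; split.
    split; first by apply/hermP.
    split => /=; last by rewrite -ip_co; [exact: h1 | exact: hZ0h].
    by move=> k hk; rewrite -ip_co; [apply: hd | apply: hKh].
  move=> Z hZ; rewrite -!ip_co; [|exact: hEh|exact: hFh].
  apply: (le_trans (hF _ hZ)); rewrite lerD2l; exact: hmin.
have hGcl : forall e, closed (G e).
  move=> e; apply: closed_forall => Z; apply: closed_imp.
  apply: closed_le2 => x.
    by apply: cvgM; [exact: cvg_cst | exact: cont_dot_l].
  by apply: cvgD; [exact: cont_dot_l | exact: cvg_cst].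
have [|x [hxB clx]] := Bc_cp _ (finI_filter hfin).
  by exists (Bc `&` G 1); [apply: finI_from1; rewrite /= ltr01 | move=> ? []].
have hG : forall e, 0 < e -> G e x.
  move=> e he; apply: (hGcl e) => B hB.
  have hF : filter_from (finI_from [set e | 0 < e] (fun e => Bc `&` G e)) id (Bc `&` G e).
    by exists (Bc `&` G e) => //; apply: (@finI_from1 R _ [set e | 0 < e] (fun e => Bc `&` G e) e).
  have [q [[_ hq] hqB]] := clx _ B hF hB.
  by exists q.
have [h1 h2 h3] := hBpsi x hxB.
exists (unco x); split => //; split => //; split => //.
move=> Z hZ; apply/ler_addgt0Pr => e he.
rewrite !ip_co ?uncoK; [exact: (hG e he) | exact: hEh | exact: hFh].
Qed.

Lemma main_sec (X : set M) : X `<=` @herm R m ->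
  [set rscale l phi | l in [set l : R | 0 <= l] & phi in X] = dual_cone K ->
  (exists2 phi, (X `\ 0) phi &
     ip phi E / support_fn F phi = 1 + robustness K F E) /\
  (forall phi, (X `\ 0) phi ->
     ip phi E / support_fn F phi <= 1 + robustness K F E).
Proof.
move=> hXh hXK.
have [cb hcb hb] := dual_bound.
have hdualX : forall phi, X phi -> herm phi /\ forall k, K k -> 0 <= ip phi k.
  move=> phi hphi; have : dual_cone K phi.
    by rewrite -hXK; exists 1; [exact: ler01 | exists phi => //; exact: rscale1].
  by case.
have pos : forall phi, herm phi -> (forall k, K k -> 0 <= ip phi k) -> phi != 0 ->
    0 < ip phi Z0.
  move=> phi hphi hd hnz; apply: (lt_le_trans _ (hb _ hphi hd)).
  apply: mulr_gt0 => //; rewrite lt_def nrm_ge0 andbT; apply/eqP => /nrm_eq0.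
  by rewrite -co0 => /co_inj /eqP; apply/negP.
have ub : forall phi, herm phi -> (forall k, K k -> 0 <= ip phi k) -> phi != 0 ->
    ip phi E / support_fn F phi <= 1 + robustness K F E.
  move=> phi hphi hd hnz; have [Zm hZm [hmax hsup]] := supp hphi; rewrite hsup.
  have hM : 0 < ip phi Zm by apply: lt_le_trans (pos _ hphi hd hnz) (hmax _ hZ0F).
  suff : ip phi E / ip phi Zm - 1 <= robustness K F E by lra.
  apply: lb_le_inf; first exact: Rset_n0.
  move=> l [l0 [E' [hE' hW]]].
  set Wl := rscale (1 + l)^-1 (E + rscale l E') in hW.
  have l1 : 0 < 1 + l by lra.
  have eW : rscale (1 + l) Wl = E + rscale l E'.
    by rewrite /Wl rscaleA mulfV ?rscale1 // gt_eqF.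
  have := hmax _ hW; have := hd _ hE'.
  have e2 := congr1 (ip phi) eW; rewrite ipZr ipDr ipZr in e2.
  move=> h1 h2.
  suff : ip phi E / ip phi Zm <= 1 + l by lra.
  rewrite ler_pdivrMr //.
  nra.
split; last first.
  move=> phi [hX hnz]; have [h1 h2] := hdualX _ hX; apply: ub => //.
  by apply/eqP.
have [psi [hpsi [hd [h1 hF]]]] := limit.
have : dual_cone K psi by split.
rewrite -hXK => -[l hl [phi hphi ephi]].
have hnz : phi != 0.
  apply/eqP => e; move: h1; rewrite -ephi e rscaler0 ip0l => /eqP.
  by rewrite eq_sym oner_eq0.
have l0 : l != 0.
  apply/eqP => e; move: h1; rewrite -ephi e rscale0 ip0l => /eqP.
  by rewrite eq_sym oner_eq0.
have lpos : 0 < l by rewrite lt_def l0.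
exists phi; first by split => //; apply/eqP.
have [hph hdph] := hdualX _ hphi.
apply/eqP; rewrite eq_le ub //=.
have [Zm hZm [hmax hsup]] := supp hph; rewrite hsup.
have hM : 0 < ip phi Zm by apply: lt_le_trans (pos _ hph hdph hnz) (hmax _ hZ0F).
have := hF _ hZm; rewrite -ephi !ipZl /tstar => h.
rewrite ler_pdivlMr //.
nra.
Qed.

End Main.

Unset Implicit Arguments.

Theorem lemma4 (R : realType) (n : nat) (K F X : set 'M[R[i]]_n.+1)
  (E : 'M[R[i]]_n.+1) :
  proper_cone K ->
  F `<=` @herm R n.+1 -> mx_compact F ->
  real_convex (shrink_hull F) ->
  F `&` herm_interior K !=set0 ->
  X `<=` @herm R n.+1 ->
  [set rscale l phi | l in [set l : R | 0 <= l] & phi in X] = dual_cone K ->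
  Nset K F E ->
  (exists2 phi, (X `\ 0) phi &
     ip phi E / support_fn F phi = 1 + robustness K F E) /\
  (forall phi, (X `\ 0) phi ->
     ip phi E / support_fn F phi <= 1 + robustness K F E).
Proof.
move=> [hKh [hKs [hKa [hKc [_ _]]]]] hFh hFc hconv [Z0 [hZ0F hZ0i]] hXh hXK hN.
exact: (main_sec hKh hKs hKa hKc hFh hFc hconv hZ0F hZ0i hN hXh hXK).
Qed.
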